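(* Let $V$ be a Lévy measure. Set $\mathcal{A}_{sym}=\emptyset$ if $V$ is symmetric and $\mathcal{A}_{sym}=\{1\}$ otherwise. Let $0<p\le q\le2$, $\mathcal{A}=\{p,q\}\cup\mathcal{A}_{sym}$, $p_{\min}=\min\mathcal{A}$, $p_{\max}=\max\mathcal{A}$, and assume $V\in\mathscr{M}(p_{\min},p_{\max})$. Define $g(\omega)=\int_{\mathbb{R}\setminus\{0\}}\left(\mathrm{e}^{\mathrm{j}\omega a}-1-\mathrm{j}\omega a\mathbb{1}_{|a|<1}\right)V(\mathrm{d}a)$. Then there exist constants $\kappa_1,\kappa_2\ge0$ such that for all $\omega\in\mathbb{R}$, $|g(\omega)|\le\kappa_1|\omega|^{p_{\min}}+\kappa_2|\omega|^{p_{\max}}$.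
   Context: A Lévy measure is a Radon measure $V$ on $\mathbb{R}\setminus\{0\}$ with $\int\min(1,a^2)V(\mathrm{d}a)<\infty$; it is symmetric if $V(B)=V(-B)$ for all Borel $B$. $\mathscr{M}(p,q)$ is the set of Radon measures $V$ on $\mathbb{R}\setminus\{0\}$ with $\int_{0<|a|<1}|a|^qV(\mathrm{d}a)<\infty$ and $\int_{|a|\ge1}|a|^pV(\mathrm{d}a)<\infty$. *)

(* Defs.v *)
(* Measures on R \ {0} are modelled as Borel
   measures on R (the canonical Borel sigma-algebra of a realType) that
   do not charge the origin. *)
From HB Require Import structures.
From mathcomp Require Import all_boot all_order all_algebra.
From mathcomp Require Import all_classical all_reals all_analysis.
Set Implicit Arguments. Unset Strict Implicit. Unset Printing Implicit Defensive.
Import Order.TTheory GRing.Theory Num.Theory.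
Import numFieldNormedType.Exports.
Local Open Scope classical_set_scope.
Local Open Scope ring_scope.

Definition Rstar (R : realType) : set R := [set~ 0].
Arguments Rstar R : clear implicits.

Definition radon_on_Rstar (R : realType) (V : {measure set R -> \bar R}) : Prop :=
  V [set 0] = 0%E /\
  forall K : set R, compact K -> K `<=` Rstar R -> (V K < +oo)%E.

Definition levy_measure (R : realType) (V : {measure set R -> \bar R}) : Prop :=
  radon_on_Rstar V /\
  (\int[V]_(a in Rstar R) (Num.min 1 (a ^+ 2))%:E < +oo)%E.

Definition symmetric_measure (R : realType) (V : {measure set R -> \bar R}) : Prop :=
  forall B : set R, measurable B -> V B = V [set - x | x in B].

Definition M_class (R : realType) (p q : R) (V : {measure set R -> \bar R}) : Prop :=
  radon_on_Rstar V /\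
  (\int[V]_(a in [set a : R | (0 < `|a| < 1)%R]) (`|a| `^ q)%:E < +oo)%E /\
  (\int[V]_(a in [set a : R | (1 <= `|a|)%R]) (`|a| `^ p)%:E < +oo)%E.

(* p_min = min ({p,q} u A_sym), p_max = max ({p,q} u A_sym), with p <= q *)
Definition pmin (R : realType) (sym : Prop) (p : R) : R :=
  if `[< sym >] then p else Num.min p 1.
Definition pmax (R : realType) (sym : Prop) (q : R) : R :=
  if `[< sym >] then q else Num.max q 1.

(* g(w) = int (e^{j w a} - 1 - j w a 1_{|a|<1}) V(da), split into real
   and imaginary parts. *)
Definition g_re (R : realType) (V : {measure set R -> \bar R}) (w : R) : R :=
  Rintegral V (Rstar R) (fun a => cos (w * a) - 1).
Definition g_im (R : realType) (V : {measure set R -> \bar R}) (w : R) : R :=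
  Rintegral V (Rstar R)
    (fun a => sin (w * a) - w * a * (\1_[set x : R | `|x| < 1] a)).
Definition abs_g (R : realType) (V : {measure set R -> \bar R}) (w : R) : R :=
  Num.sqrt (g_re V w ^+ 2 + g_im V w ^+ 2).

(* Main.v *)
Require Import Defs.
From HB Require Import structures.
From mathcomp Require Import all_boot all_order all_algebra.
From mathcomp Require Import all_classical all_reals all_analysis.
From mathcomp Require Import lra measurable_realfun.
Import Order.TTheory GRing.Theory Num.Theory.
Import numFieldNormedType.Exports.
Local Open Scope classical_set_scope.
Local Open Scope ring_scope.
Section Trig.
Variable R : realType.
Implicit Types x : R.

Lemma sin_abs_le x : `|sin x| <= `|x|.
Proof.
wlog x0 : x / 0 <= x.
  move=> H; have [/H//|x0] := leP 0 x.
  have := H (- x); rewrite sinN !normrN; apply; rewrite oppr_ge0 ltW//.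
have [c _ E] := @MVT_segment R sin cos 0 x x0 (fun y _ => is_derive_sin y)
  (continuous_subspaceT (@continuous_sin R)).
move: E; rewrite sin0 !subr0 => ->.
by rewrite normrM ler_piMl// cos_max.
Qed.

Lemma cos_bound x : 1 - cos x <= x ^+ 2 / 2.
Proof.
have -> : x = (x / 2) *+ 2 by rewrite -mulr_natr mulfVK// pnatr_eq0.
rewrite cos_mulr2n; set y := x / 2.
have h := sin_abs_le y.
have hs := cos2Dsin2 y.
have ha : `|y| ^+ 2 = y ^+ 2 by rewrite real_normK// num_real.
have hb : `|sin y| ^+ 2 = sin y ^+ 2 by rewrite real_normK// num_real.
have hs2 : sin y ^+ 2 <= y ^+ 2.
  by rewrite -ha -hb ler_pXn2r ?nnegrE ?normr_ge0.
rewrite -mulr_natr -[y *+ 2]mulr_natr. have -> : (y * 2%:R) ^+ 2 / 2 = 2 * y ^+ 2.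
  rewrite exprMn -mulrA mulrC; congr (_ * _).
  by rewrite expr2 -mulrA divff ?mulr1// pnatr_eq0.
lra.
Qed.

Lemma sinx_bound x : `|sin x - x| <= `|x| ^+ 3 / 2.
Proof.
wlog x0 : x / 0 <= x.
  move=> H; have [/H//|x0] := leP 0 x.
  have := H (- x); rewrite sinN -opprD !normrN; apply; rewrite oppr_ge0 ltW//.
have hd : forall y, y \in `]0, x[ -> is_derive y 1 (fun t => sin t - t) (cos y - 1).
  move=> y _; apply: is_deriveB.
have hc : {within `[0, x], continuous (fun t => sin t - t)}.
  apply: continuous_subspaceT => t; apply: continuousB; [exact: continuous_sin|exact: cvg_id].
have [c cin E] := @MVT_segment R (fun t => sin t - t) (fun t => cos t - 1) 0 x x0 hd hc.
move: E; rewrite sin0 subr0 subr0 => ->.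
move: cin; rewrite in_itv /= => /andP[c0 cx].
have hcb := cos_bound c.
have := cos_le1 c.
rewrite normrM subr0 (ger0_norm x0) ler0_norm ?subr_le0 ?cos_le1// => _.
rewrite opprB.
have h1 : (1 - cos c) * x <= c ^+ 2 / 2 * x by rewrite ler_wpM2r.
have h2 : c ^+ 2 <= x ^+ 2 by rewrite ler_pXn2r ?nnegrE.
apply: (le_trans h1).
have -> : x ^+ 3 / 2 = x ^+ 2 / 2 * x by rewrite exprSr mulrAC.
by rewrite ler_wpM2r// ler_pM2r.
Qed.
End Trig.
Arguments sin_abs_le {R}. Arguments cos_bound {R}. Arguments sinx_bound {R}.
Section Pw.
Variable R : realType.
Implicit Types t r s : R.
Lemma pw_small t r s : 0 <= t <= 1 -> 0 < r -> r <= s -> t `^ s <= t `^ r.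
Proof.
move=> /andP[t0 t1] r0 rs; have [->|tn0] := eqVneq t 0.
  by rewrite !powR0 // gt_eqF // (lt_le_trans r0 rs).
by apply: ger_powR => //; rewrite lt_neqAle eq_sym tn0 t0 t1.
Qed.
Lemma pw_ge1 t r : 1 <= t -> 0 <= r -> 1 <= t `^ r.
Proof. by move=> t1 r0; rewrite -(powRr0 t); exact: ler_powR. Qed.
Lemma pw_sq t : 0 <= t -> t `^ 2 = t ^+ 2.
Proof. by move=> t0; rewrite -powR_mulrn. Qed.
Lemma pw_1 t : 0 <= t -> t `^ 1 = t.
Proof. exact: powRr1. Qed.
End Pw.
Arguments pw_small {R}. Arguments pw_ge1 {R t r}. Arguments pw_sq {R t}. Arguments pw_1 {R t}.
Section PtBounds.
Variable R : realType.
Implicit Types x r : R.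

Lemma B1 x r : 0 < r -> r <= 2 -> `|cos x - 1| <= 2 * `|x| `^ r.
Proof.
move=> r0 r2; rewrite ler0_norm ?subr_le0 ?cos_le1// opprB.
have hn := normr_ge0 x.
have [x1|x1] := leP `|x| 1.
  have h := cos_bound x.
  have h2 : `|x| `^ 2 <= `|x| `^ r by apply: pw_small; rewrite ?hn.
  rewrite pw_sq // real_normK ?num_real // in h2.
  have := powR_ge0 `|x| r; have := sqr_ge0 x; lra.
have := pw_ge1 (ltW x1) (ltW r0); have := cos_geN1 x; lra.
Qed.

Lemma B2 x r : 0 < r -> r <= 1 -> `|sin x| <= `|x| `^ r.
Proof.
move=> r0 r1; have hn := normr_ge0 x.
have [x1|x1] := leP `|x| 1.
  apply: (le_trans (sin_abs_le x)).
  rewrite -{1}(pw_1 hn); apply: pw_small; rewrite ?hn//.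
apply: (le_trans (sin_max x)); exact: pw_ge1 (ltW x1) (ltW r0).
Qed.

Lemma B4 x : `|sin x - x| <= 2 * x ^+ 2.
Proof.
have hn := normr_ge0 x.
have hx2 : `|x| ^+ 2 = x ^+ 2 by rewrite real_normK ?num_real.
have [x1|x1] := leP `|x| 1.
  apply: (le_trans (sinx_bound x)); rewrite -hx2.
  have : `|x| ^+ 3 <= `|x| ^+ 2 by rewrite exprSr ler_piMr// sqr_ge0.
  have := sqr_ge0 `|x|; have := exprn_ge0 3 hn; lra.
apply: (le_trans (ler_normB _ _)).
have := sin_abs_le x; rewrite -hx2 expr2.
have : `|x| <= `|x| * `|x| by rewrite ler_peMr// ltW.
lra.
Qed.

Lemma B3 x r : 1 <= r -> r <= 2 -> `|sin x - x| <= 2 * `|x| `^ r.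
Proof.
move=> r1 r2; have hn := normr_ge0 x.
have hx2 : `|x| ^+ 2 = x ^+ 2 by rewrite real_normK ?num_real.
have [x1|x1] := leP `|x| 1.
  apply: (le_trans (sinx_bound x)).
  have h2 : `|x| `^ 2 <= `|x| `^ r by apply: pw_small; rewrite ?hn// (lt_le_trans _ r1).
  rewrite pw_sq // in h2.
  have : `|x| ^+ 3 <= `|x| ^+ 2 by rewrite exprSr ler_piMr// sqr_ge0.
  have := sqr_ge0 `|x|; have := exprn_ge0 3 hn; lra.
apply: (le_trans (ler_normB _ _)).
have := sin_abs_le x.
have : `|x| <= `|x| `^ r by apply: le1r_powR => //; rewrite ltW.
lra.
Qed.

Lemma pw_mul (w a r : R) : `|w * a| `^ r = `|w| `^ r * `|a| `^ r.
Proof. by rewrite normrM powRM. Qed.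
End PtBounds.

Local Close Scope ereal_scope.
Lemma mRstar (R : realType) : measurable (Rstar R).
Proof. exact: measurableC (measurable_set1 _). Qed.

Definition SA (R : realType) := [set a : R | (0 < `|a| < 1)%R].
Definition SB (R : realType) := [set a : R | (1 <= `|a|)%R].

Lemma mSA (R : realType) : measurable (SA R).
Proof.
have := @normr_measurable R setT measurableT _ (measurable_itv `]0%R, 1%R[).
rewrite setTI; congr measurable; apply/seteqP; split => x /=; by rewrite in_itv.
Qed.

Lemma mSB (R : realType) : measurable (SB R).
Proof.
have := @normr_measurable R setT measurableT _ (measurable_itv `[1%R, +oo[).
rewrite setTI; congr measurable; apply/seteqP; split => x /=; by rewrite in_itv /= andbT.
Qed.

Lemma RstarE (R : realType) : Rstar R = SA R `|` SB R.
Proof.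
apply/seteqP; split => x /=.
  move=> /eqP x0; have [x1|x1] := ltP `|x| 1%R; [left|right] => //.
  by rewrite /SA /=; apply/andP; split => //; rewrite normr_gt0.
rewrite /SA /SB /= => -[/andP[+ _]|+] x0; rewrite x0 normr0 ?ltxx//.
by rewrite ler10.
Qed.

Lemma SAB_disj (R : realType) : [disjoint SA R & SB R].
Proof.
apply/disj_setPS => x [] /=; rewrite /SA /SB /= => /andP[_ x1] x2.
by move: (lt_le_trans x1 x2); rewrite ltxx.
Qed.

Local Open Scope ereal_scope.
Lemma Lbound (R : realType) (V : {measure set R -> \bar R}) (P Q al be : R)
  (f : R -> R) :
  measurable_fun setT f -> (0 <= al)%R -> (0 <= be)%R ->
  \int[V]_(a in SA R) (`|a| `^ Q)%:E < +oo ->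
  \int[V]_(a in SB R) (`|a| `^ P)%:E < +oo ->
  (forall a, SA R a -> `|f a| <= al * `|a| `^ Q)%R ->
  (forall a, SB R a -> `|f a| <= be * `|a| `^ P)%R ->
  V.-integrable (Rstar R) (EFin \o f) /\
  (`|Rintegral V (Rstar R) f| <=
    al * fine (\int[V]_(a in SA R) (`|a| `^ Q)%:E)
    + be * fine (\int[V]_(a in SB R) (`|a| `^ P)%:E))%R.
Proof.
move=> mf al0 be0 IA IB hA hB.
set iA := \int[V]_(a in SA R) _; set iB := \int[V]_(a in SB R) _.
have iA0 : 0 <= iA by apply: integral_ge0 => x _; rewrite lee_fin powR_ge0.
have iB0 : 0 <= iB by apply: integral_ge0 => x _; rewrite lee_fin powR_ge0.
have fA : iA \is a fin_num by rewrite ge0_fin_numE.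
have fB : iB \is a fin_num by rewrite ge0_fin_numE.
have mEf : measurable_fun [set: R] (EFin \o f) by exact/measurable_EFinP.
have mabs : forall D, measurable_fun D (fun x => (`|f x|)%:E).
  move=> D; apply: measurable_funTS; apply/measurable_EFinP.
  exact: (measurableT_comp (@normr_measurable R setT) mf).
have mpw : forall D r, measurable_fun D (fun x : R => (`|x| `^ r)%:E).
  move=> D r; apply: measurable_funTS; apply/measurable_EFinP.
  exact: (measurableT_comp (@measurable_powR R r) (@normr_measurable R setT)).
have mpw2 : forall D c r, measurable_fun D (fun x : R => (c * `|x| `^ r)%:E).
  move=> D c r; apply: measurable_funTS; apply/measurable_EFinP.
  apply: measurable_funM; first exact: measurable_cst.
  exact: (measurableT_comp (@measurable_powR R r) (@normr_measurable R setT)).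
have bound : \int[V]_(x in Rstar R) (`|f x|)%:E <= (al * fine iA + be * fine iB)%:E.
  rewrite RstarE (ge0_integral_setU _ (mSA R) (mSB R)); last 3 first.
  - exact: mabs.
  - by move=> x _; rewrite lee_fin.
  - exact: SAB_disj.
  have h1 : \int[V]_(x in SA R) (`|f x|)%:E <= \int[V]_(x in SA R) (al * (`|x| `^ Q))%:E.
    apply: (ge0_le_integral V (mSA R)); [by move=> x _; rewrite lee_fin|exact: mabs|exact: mpw2|by move=> x /hA; rewrite lee_fin].
  have h2 : \int[V]_(x in SA R) (al * (`|x| `^ Q))%:E = (al * fine iA)%:E.
    rewrite (eq_integral (fun x : R => al%:E * (`|x| `^ Q)%:E)); last by move=> x _; rewrite EFinM.
    rewrite ge0_integralZl_EFin //; [by rewrite -/iA EFinM fineK|exact: mSA].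
  have h3 : \int[V]_(x in SB R) (`|f x|)%:E <= \int[V]_(x in SB R) (be * (`|x| `^ P))%:E.
    apply: (ge0_le_integral V (mSB R)); [by move=> x _; rewrite lee_fin|exact: mabs|exact: mpw2|by move=> x /hB; rewrite lee_fin].
  have h4 : \int[V]_(x in SB R) (be * (`|x| `^ P))%:E = (be * fine iB)%:E.
    rewrite (eq_integral (fun x : R => be%:E * (`|x| `^ P)%:E)); last by move=> x _; rewrite EFinM.
    rewrite ge0_integralZl_EFin //; [by rewrite -/iB EFinM fineK|exact: mSB].
  rewrite h2 in h1; rewrite h4 in h3; exact: (leeD h1 h3).
have intf : V.-integrable (Rstar R) (EFin \o f).
  apply/integrableP; split; first exact: measurable_funS mEf.
  exact: (le_lt_trans bound (ltry _)).
split => //.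
have fin := integrable_fin_num (mRstar R) intf.
have := le_abse_integral V (mRstar R) (measurable_funTS mEf).
rewrite /Rintegral -[X in `|X|]fineK// -lee_fin => h.
exact: le_trans h bound.
Qed.

Lemma odd_int (R : realType) (V : {measure set R -> \bar R}) (f : R -> R) :
  symmetric_measure V -> measurable_fun setT f ->
  V.-integrable (Rstar R) (EFin \o f) -> (forall x, f (- x) = - f x)%R ->
  Rintegral V (Rstar R) f = 0%R.
Proof.
move=> sV mf intf fodd.
have mneg : measurable_fun setT (-%R : R -> R) by exact: measurable_realfun.oppr_measurable.
have mEf : measurable_fun [set: R] (EFin \o f) by exact/measurable_realfun.measurable_EFinP.
have pre : (-%R) @^-1` Rstar R = Rstar R.
  by apply/seteqP; split => x /=; rewrite /Rstar /= => h; [move=> x0; apply: h; rewrite x0 oppr0|move/eqP; rewrite oppr_eq0 => /eqP].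
have comp : (EFin \o f) \o -%R = (fun x => - (EFin \o f) x).
  by apply/funext => x /=; rewrite fodd.
have intN : V.-integrable ((-%R) @^-1` Rstar R) ((EFin \o f) \o -%R).
  by rewrite pre comp; exact: integrableN.
have E := integral_pushforward mneg mEf intN (mRstar R).
rewrite (eq_measure_integral V) in E; last first.
  move=> A mA _ /=; rewrite /pushforward (sV A mA); congr (V _).
  apply/seteqP; split => x /=.
    by move=> Ax; exists (- x)%R => //; rewrite opprK.
  by move=> [y Ay <-]; rewrite opprK.
move: E; rewrite pre comp integralN; last first.
  apply: fin_num_adde_defl; rewrite fin_numN.
  by apply: integrable_neg_fin_num => //; exact: mRstar.
have fin := integrable_fin_num (mRstar R) intf.
rewrite /Rintegral; move: fin; set z := \int[V]_(x in Rstar R) (EFin \o f) x.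
move=> fin E.
rewrite -[z]fineK// in E; move: E; rewrite -EFinN => /eqP; rewrite eqe => /eqP.
move=> h; have := h; lra.
Qed.

Local Close Scope ereal_scope.

Lemma sqrt_le (R : realType) (a b : R) : Num.sqrt (a ^+ 2 + b ^+ 2) <= `|a| + `|b|.
Proof.
rewrite -[X in _ <= X]ger0_norm ?addr_ge0// -sqrtr_sqr ler_wsqrtr//.
rewrite sqrrD -(real_normK (num_real a)) -(real_normK (num_real b)).
rewrite -[_ *+ 2]mulr_natr.
have := mulr_ge0 (normr_ge0 a) (normr_ge0 b); lra.
Qed.

Lemma mInd (R : realType) : measurable [set x : R | `|x| < 1].
Proof.
have := @normr_measurable R setT measurableT _ (measurable_itv `]-oo, 1%R[).
rewrite setTI; congr measurable; apply/seteqP; split => x /=; by rewrite in_itv.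
Qed.

Theorem corollary3p13 (R : realType) (V : {measure set R -> \bar R})
  (p q : R) :
  levy_measure V ->
  0 < p -> p <= q -> q <= 2 ->
  M_class (pmin (symmetric_measure V) p) (pmax (symmetric_measure V) q) V ->
  exists k1 k2 : R, 0 <= k1 /\ 0 <= k2 /\
    forall w : R,
      abs_g V w <= k1 * `|w| `^ (pmin (symmetric_measure V) p)
                   + k2 * `|w| `^ (pmax (symmetric_measure V) q).
Proof.
move=> _ p0 pq q2 [_ [hIA hIB]].
set P := pmin _ p in hIA hIB *; set Q := pmax _ q in hIA hIB *.
have [hP0 hPQ hQ2 hns] : [/\ 0 < P, P <= Q, Q <= 2 &
    (~ symmetric_measure V -> P <= 1 /\ 1 <= Q)].
  rewrite /P /Q /pmin /pmax; case: (asboolP (symmetric_measure V)) => hs.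
    by split => // /(_ hs).
  rewrite /Order.min /Order.max /=.
  by case: (ltP p 1) => h1; case: (ltP q 1) => h2; split; try lra; move=> _; split; lra.
have hQ0 : 0 < Q by apply: lt_le_trans hPQ.
set cA := fine (\int[V]_(a in SA R) (`|a| `^ Q)%:E).
set cB := fine (\int[V]_(a in SB R) (`|a| `^ P)%:E).
have cA0 : 0 <= cA by apply: fine_ge0; apply: integral_ge0 => x _; rewrite lee_fin powR_ge0.
have cB0 : 0 <= cB by apply: fine_ge0; apply: integral_ge0 => x _; rewrite lee_fin powR_ge0.
exists (3 * cB), (4 * cA); split; first by rewrite mulr_ge0.
split; first by rewrite mulr_ge0.
move=> w.
have wP0 := powR_ge0 `|w| P; have wQ0 := powR_ge0 `|w| Q.
have mwa : measurable_fun setT (fun a : R => w * a).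
  by apply: measurable_funM; [exact: measurable_cst|exact: measurable_id].
have mcos : measurable_fun setT (fun a : R => cos (w * a) - 1).
  apply: measurable_funB; last exact: measurable_cst.
  exact: (measurableT_comp (continuous_measurable_fun (@continuous_cos R)) mwa).
have hre : `|g_re V w| <= 2 * `|w| `^ Q * cA + 2 * `|w| `^ P * cB.
  apply: (proj2 (@Lbound R V P Q _ _ _ mcos _ _ hIA hIB _ _)).
  - by rewrite mulr_ge0.
  - by rewrite mulr_ge0.
  - by move=> a _; rewrite -mulrA -pw_mul; exact: B1.
  - by move=> a _; rewrite -mulrA -pw_mul; exact: B1 (le_trans hPQ hQ2).
pose f := fun a : R => sin (w * a) - w * a * (\1_[set x : R | `|x| < 1] a).
have mf : measurable_fun setT f.
  apply: measurable_funB.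
    exact: (measurableT_comp (continuous_measurable_fun (@continuous_sin R)) mwa).
  by apply: measurable_funM => //; exact: measurable_indic (mInd R).
have fA : forall a, SA R a -> f a = sin (w * a) - w * a.
  move=> a /andP[_ a1]; rewrite /f indicE mem_set ?mulr1//.
have fB : forall a, SB R a -> f a = sin (w * a).
  move=> a a1; rewrite /f indicE memNset ?mulr0 ?subr0//= => /(le_lt_trans a1).
  by rewrite ltxx.
have him : `|g_im V w| <= 2 * `|w| `^ Q * cA + `|w| `^ P * cB.
  case: (pselect (symmetric_measure V)) => hs; last first.
    have [hP1 hQ1] := hns hs.
    apply: (proj2 (@Lbound R V P Q _ _ f mf _ _ hIA hIB _ _)).
    - by rewrite mulr_ge0.
    - by [].
    - by move=> a ha; rewrite fA// -mulrA -pw_mul; exact: B3.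
    - by move=> a hb; rewrite fB// -pw_mul; exact: B2.
  have hA' : forall a, SA R a -> `|f a| <= 2 * w ^+ 2 * `|a| `^ Q.
    move=> a ha; rewrite fA//; apply: le_trans (B4 _ (w * a)) _.
    have h2 : `|a| `^ 2 <= `|a| `^ Q.
      apply: pw_small => //; move: ha => /andP[_ a1]; rewrite normr_ge0 ltW//.
    rewrite pw_sq ?normr_ge0// real_normK ?num_real// in h2.
    rewrite exprMn -mulrA; apply: ler_wpM2l => //; apply: ler_wpM2l => //.
    exact: sqr_ge0.
  have hB' : forall a, SB R a -> `|f a| <= 1 * `|a| `^ P.
    move=> a hb; rewrite fB// mul1r; apply: le_trans (sin_max _) _.
    exact: (pw_ge1 hb (ltW hP0)).
  have [intf _] := @Lbound R V P Q (2 * w ^+ 2) 1 f mf (mulr_ge0 (ler0n _ 2) (sqr_ge0 w)) ler01 hIA hIB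
    hA' hB'.
  have -> : g_im V w = 0.
    apply: odd_int => // x.
    have E : (- x \in [set x0 : R | `|x0| < 1]) = (x \in [set x0 : R | `|x0| < 1]).
      by apply/idP/idP => /set_mem /= h; apply/mem_set => /=; rewrite ?normrN in h *.
    rewrite /f !mulrN sinN !indicE E; lra.
  rewrite normr0; have := mulr_ge0 wQ0 cA0; have := mulr_ge0 wP0 cB0; lra.
rewrite /abs_g; apply: le_trans (sqrt_le _ _ _) _.
lra.
Qed.
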